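(* Let $G$ be the infinite triangular grid. The code $C=\{v(i,j)\mid i\equiv 0 \pmod 2,\ j\equiv 0\pmod 2\}$ is self-locating-dominating in $G$, and therefore also solid-locating-dominating. The density of $C$ equals $1/4$, and there exists no self-locating-dominating code and no solid-locating-dominating code in $G$ with density smaller than $1/4$.
   Context: The infinite triangular grid $G=(V,E)$ has vertex set $V=\{v(i,j)\mid i,j\in\mathbb{Z}\}$ where $v(i,j)=i(1,0)+j(\tfrac12,\tfrac{\sqrt3}{2})\in\mathbb{R}^2$, and two vertices are adjacent iff their Euclidean distance is $1$. Let $V_n=\{v(i,j)\mid |i|,|j|\le n\}$; the density of a code $C\subseteq V$ is $D(C)=\limsup_{n\to\infty}|C\cap V_n|/|V_n|$. $N[v]$ is the closed neighbourhood of $v$, and for a code (nonempty subset) $C$, $I(C;v)=N[v]\cap C$. A code $C$ is self-locating-dominating if for every $u\in V\setminus C$, $I(C;u)\ne\emptyset$ and $\bigcap_{c\in I(C;u)}N[c]=\{u\}$. A code $C$ is solid-locating-dominating if for all distinct $u,v\in V\setminus C$, $I(C;u)\setminus I(C;v)\neq\emptyset$. *)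

(* Defs.v *)
From Stdlib Require Import ZArith Reals ClassicalDescription.
From Coquelicot Require Import Coquelicot.
Open Scope R_scope.

Definition vtx := (Z * Z)%type.

Definition vpos (p : vtx) : R * R :=
  (IZR (fst p) + IZR (snd p) / 2, IZR (snd p) * sqrt 3 / 2).

Definition edist (x y : R * R) : R :=
  sqrt ((fst x - fst y) ^ 2 + (snd x - snd y) ^ 2).

Definition adj (u v : vtx) : Prop := edist (vpos u) (vpos v) = 1.

Definition inN (v w : vtx) : Prop := w = v \/ adj v w.

Definition code := vtx -> Prop.

Definition inI (C : code) (u c : vtx) : Prop := inN u c /\ C c.

Definition self_locating_dominating (C : code) : Prop :=
  forall u, ~ C u ->
    (exists c, inI C u c) /\
    (forall w, (forall c, inI C u c -> inN c w) <-> w = u).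

Definition solid_locating_dominating (C : code) : Prop :=
  forall u v, ~ C u -> ~ C v -> u <> v ->
    exists c, inI C u c /\ ~ inI C v c.

(* |C ∩ V_n| with V_n = {v(i,j) | |i|,|j| <= n} *)
Definition ind (P : Prop) : R := if excluded_middle_informative P then 1 else 0.

Definition count_in_Vn (C : code) (n : nat) : R :=
  sum_f_R0 (fun a =>
    sum_f_R0 (fun b =>
      ind (C (Z.of_nat a - Z.of_nat n, Z.of_nat b - Z.of_nat n)%Z)) (2 * n))
    (2 * n).

Definition card_Vn (n : nat) : R := (2 * INR n + 1) ^ 2.

Definition density (C : code) : Rbar :=
  LimSup_seq (fun n => count_in_Vn C n / card_Vn n).

Definition C_even : code :=
  fun p => Z.even (fst p) = true /\ Z.even (snd p) = true.

(* Main.v *)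
Require Import Defs.
From Stdlib Require Import ZArith Reals Lra Lia Psatz Classical ClassicalDescription.
From Coquelicot Require Import Coquelicot.
Open Scope R_scope.

Lemma q_six (a b : Z) : (a*a + a*b + b*b = 1)%Z <->
  ((a = 1 /\ b = 0) \/ (a = -1 /\ b = 0) \/ (a = 0 /\ b = 1) \/ (a = 0 /\ b = -1)
   \/ (a = 1 /\ b = -1) \/ (a = -1 /\ b = 1))%Z.
Proof.
  split.
  - intros H. assert (Hb : (-1 <= b <= 1)%Z) by nia.
    assert (Ha : (-1 <= a <= 1)%Z) by nia.
    assert (Hc : (a = -1 \/ a = 0 \/ a = 1)%Z) by lia.
    assert (Hd : (b = -1 \/ b = 0 \/ b = 1)%Z) by lia.
    destruct Hc as [Hc|[Hc|Hc]]; destruct Hd as [Hd|[Hd|Hd]]; subst; lia.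
  - intros; intuition subst; reflexivity.
Qed.

Lemma adj_Z x y x' y' : adj (x,y) (x',y') <->
  (((x'-x)*(x'-x) + (x'-x)*(y'-y) + (y'-y)*(y'-y)) = 1)%Z.
Proof.
  unfold adj, edist, vpos; cbn [fst snd].
  assert (Hs : sqrt 3 * sqrt 3 = 3) by (apply sqrt_sqrt; lra).
  set (q := ((x'-x)*(x'-x) + (x'-x)*(y'-y) + (y'-y)*(y'-y))%Z).
  assert (E : (IZR x + IZR y / 2 - (IZR x' + IZR y' / 2)) ^ 2 +
      (IZR y * sqrt 3 / 2 - IZR y' * sqrt 3 / 2) ^ 2 = IZR q).
  { unfold q. rewrite !plus_IZR, !mult_IZR, !minus_IZR.
    replace ((IZR y * sqrt 3 / 2 - IZR y' * sqrt 3 / 2) ^ 2) with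
      ((IZR y - IZR y')^2 * (sqrt 3 * sqrt 3) / 4) by field.
    rewrite Hs. field. }
  rewrite E. split.
  - intros H. apply eq_IZR. rewrite <- sqrt_1 in H.
    assert (0 <= IZR q) by (rewrite <- E; apply Rplus_le_le_0_compat; apply pow2_ge_0).
    apply sqrt_inj in H; [|lra|lra]. rewrite H. reflexivity.
  - intros H. rewrite H. apply sqrt_1.
Qed.

Lemma inN_Z x y x' y' : inN (x,y) (x',y') <->
  ((x' = x /\ y' = y) \/ (x'-x = 1 /\ y'-y = 0) \/ (x'-x = -1 /\ y'-y = 0)
   \/ (x'-x = 0 /\ y'-y = 1) \/ (x'-x = 0 /\ y'-y = -1)
   \/ (x'-x = 1 /\ y'-y = -1) \/ (x'-x = -1 /\ y'-y = 1))%Z.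
Proof.
  unfold inN. rewrite adj_Z, q_six. split.
  - intros [H|H]; [left; injection H; lia| right; exact H].
  - intros [[H1 H2]|H]; [left; subst; reflexivity| right; exact H].
Qed.

Lemma inN_sym u w : inN u w -> inN w u.
Proof. destruct u as [x y], w as [x' y']. rewrite !inN_Z. lia. Qed.

Lemma inN_refl u : inN u u.
Proof. left; reflexivity. Qed.

Lemma self_solid C : self_locating_dominating C -> solid_locating_dominating C.
Proof.
  intros HS u v Hu Hv Huv.
  apply NNPP. intros Hn.
  destruct (HS u Hu) as [_ H].
  apply Huv. symmetry. apply (proj1 (H v)).
  intros c Hc. apply inN_sym.
  apply NNPP. intros Hc2. apply Hn. exists c. split; [exact Hc|].
  intros [Hc3 _]. exact (Hc2 Hc3).
Qed.

Lemma even2 k : Z.even (2*k) = true.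
Proof. rewrite Z.even_mul. reflexivity. Qed.

Lemma Ceven2 k l : C_even (2*k, 2*l)%Z.
Proof. split; apply even2. Qed.

Lemma even_odd_case i : (exists k, i = 2*k)%Z \/ (exists k, i = 2*k+1)%Z.
Proof.
  destruct (Z.Even_or_Odd i) as [[k H]|[k H]]; [left|right]; exists k; exact H.
Qed.

Lemma odd_not_even k : Z.even (2*k+1) = false.
Proof. rewrite Z.even_add, even2. reflexivity. Qed.

Lemma Ceven_self : self_locating_dominating C_even.
Proof.
  intros [i j] Hu.
  assert (Hpair : forall c1 c2 : vtx, C_even c1 -> C_even c2 -> inN (i,j) c1 -> inN (i,j) c2 ->
     (forall w1 w2, inN c1 (w1,w2) -> inN c2 (w1,w2) -> w1 = i /\ w2 = j) ->
     (exists c, inI C_even (i,j) c) /\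
     (forall w, (forall c, inI C_even (i,j) c -> inN c w) <-> w = (i,j))).
  { intros c1 c2 H1 H2 N1 N2 HW. split.
    - exists c1. split; assumption.
    - intros [w1 w2]. split.
      + intros H. destruct (HW w1 w2) as [-> ->].
        * apply H. split; assumption.
        * apply H. split; assumption.
        * reflexivity.
      + intros Hw. rewrite Hw. intros c [Hc _]. apply inN_sym. exact Hc. }
  destruct (even_odd_case i) as [[k Hk]|[k Hk]]; destruct (even_odd_case j) as [[l Hl]|[l Hl]]; subst.
  - exfalso. apply Hu. apply Ceven2.
  - apply (Hpair (2*k, 2*l)%Z (2*k, 2*(l+1))%Z).
    + apply Ceven2. + apply Ceven2.
    + rewrite inN_Z. lia. + rewrite inN_Z. lia.
    + intros w1 w2. rewrite !inN_Z. lia.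
  - apply (Hpair (2*k, 2*l)%Z (2*(k+1), 2*l)%Z).
    + apply Ceven2. + apply Ceven2.
    + rewrite inN_Z. lia. + rewrite inN_Z. lia.
    + intros w1 w2. rewrite !inN_Z. lia.
  - apply (Hpair (2*(k+1), 2*l)%Z (2*k, 2*(l+1))%Z).
    + apply Ceven2. + apply Ceven2.
    + rewrite inN_Z. lia. + rewrite inN_Z. lia.
    + intros w1 w2. rewrite !inN_Z. lia.
Qed.

Fixpoint sumZ (lo : Z) (len : nat) (f : Z -> R) : R :=
  match len with O => 0 | S k => sumZ lo k f + f (lo + Z.of_nat k)%Z end.

Lemma sumZ_S lo k f : sumZ lo (S k) f = sumZ lo k f + f (lo + Z.of_nat k)%Z.
Proof. reflexivity. Qed.

Lemma sumZ_le lo len f g : (forall i, f i <= g i) -> sumZ lo len f <= sumZ lo len g.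
Proof. intros H; induction len; simpl; [lra|]. specialize (H (lo + Z.of_nat len)%Z). lra. Qed.

Lemma sumZ_ext lo len f g : (forall i, f i = g i) -> sumZ lo len f = sumZ lo len g.
Proof. intros H; induction len; simpl; [lra|]. rewrite IHlen, H. reflexivity. Qed.

Lemma sumZ_nonneg lo len f : (forall i, 0 <= f i) -> 0 <= sumZ lo len f.
Proof. intros H; induction len; simpl; [lra|]. specialize (H (lo + Z.of_nat len)%Z). lra. Qed.

Lemma sumZ_plus lo len f g : sumZ lo len (fun i => f i + g i) = sumZ lo len f + sumZ lo len g.
Proof. induction len; simpl; [lra|]. rewrite IHlen. ring. Qed.

Lemma sumZ_scal lo len c f : sumZ lo len (fun i => c * f i) = c * sumZ lo len f.
Proof. induction len; simpl; [lra|]. rewrite IHlen. ring. Qed.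

Lemma sumZ_const lo len c : sumZ lo len (fun _ => c) = INR len * c.
Proof. induction len; simpl sumZ; [simpl; lra|]. rewrite IHlen, S_INR. ring. Qed.

Lemma sumZ_shift lo len d f : sumZ lo len (fun i => f (i + d)%Z) = sumZ (lo + d) len f.
Proof. induction len; simpl; [lra|]. rewrite IHlen. f_equal. f_equal. lia. Qed.

Lemma sumZ_split lo a b f : sumZ lo (a + b) f = sumZ lo a f + sumZ (lo + Z.of_nat a) b f.
Proof.
  induction b; simpl.
  - rewrite Nat.add_0_r. lra.
  - rewrite Nat.add_succ_r. simpl. rewrite IHb. rewrite Nat2Z.inj_add.
    rewrite Z.add_assoc. ring.
Qed.

Lemma sumZ_sub lo k len f : (k <= 2)%nat -> (forall i, 0 <= f i) ->
  sumZ (lo + Z.of_nat k) len f <= sumZ lo (len + 2) f.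
Proof.
  intros Hk H.
  replace (len + 2)%nat with (k + (len + (2 - k)))%nat by lia.
  rewrite sumZ_split, sumZ_split.
  pose proof (sumZ_nonneg lo k f H).
  pose proof (sumZ_nonneg (lo + Z.of_nat k + Z.of_nat len) (2-k) f H). lra.
Qed.

Definition box (n : nat) (g : vtx -> R) : R :=
  sumZ (- Z.of_nat n) (2*n+1) (fun i => sumZ (- Z.of_nat n) (2*n+1) (fun j => g (i,j))).

Lemma box_le n f g : (forall p, f p <= g p) -> box n f <= box n g.
Proof. intros H. unfold box. apply sumZ_le. intros i. apply sumZ_le. intros j. apply H. Qed.

Lemma box_plus n f g : box n (fun p => f p + g p) = box n f + box n g.
Proof. unfold box. rewrite <- sumZ_plus. apply sumZ_ext. intros i. apply sumZ_plus. Qed.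

Lemma box_scal n c f : box n (fun p => c * f p) = c * box n f.
Proof. unfold box. rewrite <- sumZ_scal. apply sumZ_ext. intros i. apply sumZ_scal. Qed.

Lemma box_const n c : box n (fun _ => c) = (2 * INR n + 1)^2 * c.
Proof.
  unfold box. rewrite sumZ_const. rewrite sumZ_const.
  rewrite plus_INR, mult_INR. simpl. ring.
Qed.

Lemma sum_f_R0_sumZ (f : Z -> R) n m :
  sum_f_R0 (fun a => f (Z.of_nat a - Z.of_nat n)%Z) m = sumZ (- Z.of_nat n) (S m) f.
Proof.
  induction m.
  - simpl. rewrite Rplus_0_l. f_equal. lia.
  - rewrite tech5. rewrite IHm. rewrite (sumZ_S _ (S m)). f_equal. f_equal. lia.
Qed.

Lemma count_box C n : count_in_Vn C n = box n (fun p => Defs.ind (C p)).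
Proof.
  unfold count_in_Vn, box.
  rewrite (sum_f_R0_sumZ (fun i => sum_f_R0 (fun b => Defs.ind (C (i, Z.of_nat b - Z.of_nat n)%Z)) (2*n))).
  rewrite Nat.add_1_r. apply sumZ_ext. intros i.
  apply (sum_f_R0_sumZ (fun j => Defs.ind (C (i, j)))).
Qed.

Lemma shift_le n a b (G : vtx -> vtx -> R) : (forall p q, 0 <= G p q) ->
  (-1 <= a <= 1)%Z -> (-1 <= b <= 1)%Z ->
  box n (fun p => G p (fst p + a, snd p + b)%Z) <=
  box (S n) (fun c => G (fst c - a, snd c - b)%Z c).
Proof.
  intros HG Ha Hb. unfold box.
  set (H := fun c : vtx => G (fst c - a, snd c - b)%Z c).
  transitivity (sumZ (- Z.of_nat n) (2*n+1) (fun i => (fun i' => sumZ (- Z.of_nat n) (2*n+1)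
     (fun j => (fun j' => H (i', j')) (j + b)%Z)) (i + a)%Z)).
  { right. apply sumZ_ext. intros i. apply sumZ_ext. intros j. unfold H. cbn [fst snd].
    f_equal. f_equal; ring. }
  eapply Rle_trans; [right; apply (sumZ_shift _ _ a (fun i' => sumZ (- Z.of_nat n) (2*n+1)
     (fun j => (fun j' => H (i', j')) (j + b)%Z)))|].
  transitivity (sumZ (- Z.of_nat n + a) (2 * n + 1)
    (fun i' : Z => sumZ (- Z.of_nat n + b) (2 * n + 1) (fun j' => H (i', j')))).
  { right. apply sumZ_ext. intros i. apply (sumZ_shift _ _ b (fun j' => H (i, j'))). }
  assert (HH : forall p, 0 <= H p) by (intros; apply HG).
  replace (2 * S n + 1)%nat with ((2*n+1) + 2)%nat by lia.
  replace (- Z.of_nat n + a)%Z with (- Z.of_nat (S n) + Z.of_nat (Z.to_nat (a+1)))%Z by lia.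
  replace (- Z.of_nat n + b)%Z with (- Z.of_nat (S n) + Z.of_nat (Z.to_nat (b+1)))%Z by lia.
  eapply Rle_trans.
  - apply sumZ_le. intros i. apply sumZ_sub; [lia|]. intros j. apply HH.
  - apply sumZ_sub; [lia|]. intros i. apply sumZ_nonneg. intros j. apply HH.
Qed.

Lemma ind_true (P : Prop) : P -> Defs.ind P = 1.
Proof. intros H. unfold Defs.ind. destruct (excluded_middle_informative P); tauto. Qed.
Lemma ind_false (P : Prop) : ~ P -> Defs.ind P = 0.
Proof. intros H. unfold Defs.ind. destruct (excluded_middle_informative P); tauto. Qed.
Lemma ind_01 (P : Prop) : Defs.ind P = 0 \/ Defs.ind P = 1.
Proof. unfold Defs.ind. destruct (excluded_middle_informative P); auto. Qed.

Definition two_in (C : code) (u : vtx) : Prop :=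
  exists c1 c2, c1 <> c2 /\ inI C u c1 /\ inI C u c2.

Definition hw (C : code) (u : vtx) : R :=
  if excluded_middle_informative (two_in C u) then 1 else 2.

Lemma hw_12 C u : hw C u = 1 \/ hw C u = 2.
Proof. unfold hw. destruct (excluded_middle_informative _); auto. Qed.

Lemma hw_1 C u : two_in C u -> hw C u = 1.
Proof. unfold hw. destruct (excluded_middle_informative _); tauto. Qed.
Lemma hw_2 C u : hw C u = 2 -> ~ two_in C u.
Proof. unfold hw. destruct (excluded_middle_informative _); intros; [lra|tauto]. Qed.

Lemma hC C u w : C u -> C w -> u <> w -> inN u w -> hw C u = 1.
Proof.
  intros Hu Hw Huw N. apply hw_1. exists u, w. split; [exact Huw|].
  split; split; auto. apply inN_refl.
Qed.

Lemma key C : solid_locating_dominating C -> forall c w v, C c -> inN c w ->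
  ~ C w -> hw C w = 2 -> inN c v -> v <> w -> C v.
Proof.
  intros HS c w v Hc N Hw H2 Nv Hvw. apply NNPP. intros Hv.
  destruct (HS w v Hw Hv (fun e => Hvw (eq_sym e))) as [e [He1 He2]].
  apply (hw_2 _ _ H2).
  destruct (classic (e = c)) as [E|E].
  - subst. exfalso. apply He2. split; [apply inN_sym; exact Nv| exact Hc].
  - exists e, c. split; [exact E|]. split; [exact He1|]. split; [apply inN_sym; exact N|exact Hc].
Qed.

Lemma nonempty C : solid_locating_dominating C -> forall u, exists c, inI C u c.
Proof.
  intros HS [x y].
  destruct (classic (C (x,y))) as [H|H].
  - exists (x,y). split; [apply inN_refl|exact H].
  - destruct (classic (C (x+1,y)%Z)) as [H1|H1].
    + exists (x+1,y)%Z. split; [rewrite inN_Z; lia|exact H1].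
    + assert (Hne : (x,y) <> (x+1,y)%Z) by (intros E; injection E; lia).
      destruct (HS _ _ H H1 Hne) as [e [He _]]. exists e. exact He.
Qed.

Definition Dsum (F : Z -> Z -> R) : R :=
  F 0%Z 0%Z + F 1%Z 0%Z + F (-1)%Z 0%Z + F 0%Z 1%Z + F 0%Z (-1)%Z + F 1%Z (-1)%Z + F (-1)%Z 1%Z.

Lemma lower_pt C : solid_locating_dominating C -> forall p,
  2 <= Dsum (fun a b => Defs.ind (C (fst p + a, snd p + b)%Z) * hw C p).
Proof.
  intros HS [x y]. unfold Dsum. cbn [fst snd].
  assert (Hnn : forall a b, 0 <= Defs.ind (C (x + a, y + b)%Z)) by
    (intros a b; destruct (ind_01 (C (x + a, y + b)%Z)) as [E|E]; rewrite E; lra).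
  assert (Hrep : forall w1 w2, inI C (x,y) (w1,w2) -> exists a b,
     (w1 = x + a /\ w2 = y + b /\ ((a = 0 /\ b = 0) \/ (a = 1 /\ b = 0) \/ (a = -1 /\ b = 0)
      \/ (a = 0 /\ b = 1) \/ (a = 0 /\ b = -1) \/ (a = 1 /\ b = -1) \/ (a = -1 /\ b = 1)))%Z
      /\ Defs.ind (C (x+a, y+b)%Z) = 1).
  { intros w1 w2 [N Hc]. exists (w1 - x)%Z, (w2 - y)%Z. split.
    - rewrite inN_Z in N. lia.
    - apply ind_true. replace (x + (w1 - x))%Z with w1 by ring.
      replace (y + (w2 - y))%Z with w2 by ring. exact Hc. }
  pose proof (Hnn 0 0)%Z. pose proof (Hnn 1 0)%Z. pose proof (Hnn (-1) 0)%Z.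
  pose proof (Hnn 0 1)%Z. pose proof (Hnn 0 (-1))%Z. pose proof (Hnn 1 (-1))%Z.
  pose proof (Hnn (-1) 1)%Z.
  destruct (classic (two_in C (x,y))) as [T|T].
  - rewrite (hw_1 _ _ T). destruct T as [[c1 c2] [[d1 d2] [Hne [I1 I2]]]].
    destruct (Hrep _ _ I1) as [a1 [b1 [[E1 [E2 Hab1]] V1]]].
    destruct (Hrep _ _ I2) as [a2 [b2 [[E3 [E4 Hab2]] V2]]].
    subst.
    assert (Hd : (a1, b1) <> (a2, b2)) by (intros E; injection E; intros; subst; apply Hne; reflexivity).
    destruct Hab1 as [[-> ->]|[[-> ->]|[[-> ->]|[[-> ->]|[[-> ->]|[[-> ->]|[-> ->]]]]]]];
    destruct Hab2 as [[-> ->]|[[-> ->]|[[-> ->]|[[-> ->]|[[-> ->]|[[-> ->]|[-> ->]]]]]]];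
    try (exfalso; apply Hd; reflexivity); lra.
  - assert (Hh : hw C (x,y) = 2) by (unfold hw; destruct (excluded_middle_informative _); tauto).
    rewrite Hh. destruct (nonempty C HS (x,y)) as [[c1 c2] I1].
    destruct (Hrep _ _ I1) as [a1 [b1 [[E1 [E2 Hab1]] V1]]]. subst.
    destruct Hab1 as [[-> ->]|[[-> ->]|[[-> ->]|[[-> ->]|[[-> ->]|[[-> ->]|[-> ->]]]]]]]; lra.
Qed.

Lemma combi (a b1 b2 b3 b4 b5 b6 : R) (x1 x2 x3 x4 x5 x6 : Prop) :
  (a = 1 \/ a = 2) -> (b1 = 1 \/ b1 = 2) -> (b2 = 1 \/ b2 = 2) -> (b3 = 1 \/ b3 = 2) ->
  (b4 = 1 \/ b4 = 2) -> (b5 = 1 \/ b5 = 2) -> (b6 = 1 \/ b6 = 2) ->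
  (x1 -> b1 = 1 /\ a = 1) -> (x2 -> b2 = 1 /\ a = 1) -> (x3 -> b3 = 1 /\ a = 1) ->
  (x4 -> b4 = 1 /\ a = 1) -> (x5 -> b5 = 1 /\ a = 1) -> (x6 -> b6 = 1 /\ a = 1) ->
  (b1 = 2 -> x2 /\ x3 /\ x4 /\ x5 /\ x6) ->
  (b2 = 2 -> x1 /\ x3 /\ x4 /\ x5 /\ x6) ->
  (b3 = 2 -> x1 /\ x2 /\ x4 /\ x5 /\ x6) ->
  (b4 = 2 -> x1 /\ x2 /\ x3 /\ x5 /\ x6) ->
  (b5 = 2 -> x1 /\ x2 /\ x3 /\ x4 /\ x6) ->
  (b6 = 2 -> x1 /\ x2 /\ x3 /\ x4 /\ x5) ->
  a + b1 + b2 + b3 + b4 + b5 + b6 <= 8.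
Proof.
  intros Ha H1 H2 H3 H4 H5 H6 X1 X2 X3 X4 X5 X6 Y1 Y2 Y3 Y4 Y5 Y6.
  destruct H1 as [H1|H1]; [|destruct (Y1 H1) as (?&?&?&?&?); intuition lra].
  destruct H2 as [H2|H2]; [|destruct (Y2 H2) as (?&?&?&?&?); intuition lra].
  destruct H3 as [H3|H3]; [|destruct (Y3 H3) as (?&?&?&?&?); intuition lra].
  destruct H4 as [H4|H4]; [|destruct (Y4 H4) as (?&?&?&?&?); intuition lra].
  destruct H5 as [H5|H5]; [|destruct (Y5 H5) as (?&?&?&?&?); intuition lra].
  destruct H6 as [H6|H6]; [|destruct (Y6 H6) as (?&?&?&?&?); intuition lra].
  destruct Ha; lra.
Qed.

Lemma upper_pt C : solid_locating_dominating C -> forall c,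
  Dsum (fun a b => Defs.ind (C c) * hw C (fst c - a, snd c - b)%Z) <= 8 * Defs.ind (C c).
Proof.
  intros HS [x y]. unfold Dsum. cbn [fst snd].
  destruct (classic (C (x,y))) as [Hc|Hc]; [|rewrite (ind_false _ Hc); lra].
  rewrite (ind_true _ Hc). rewrite !Rmult_1_l, Rmult_1_r.
  rewrite !Z.sub_0_r.
  assert (G : forall w1 w2, inN (x,y) (w1,w2) -> (w1,w2) <> (x,y) ->
     (C (w1,w2) -> hw C (w1,w2) = 1 /\ hw C (x,y) = 1)).
  { intros w1 w2 N Hne Hw. split.
    - apply (hC C _ (x,y)); auto. apply inN_sym; exact N.
    - apply (hC C _ (w1,w2)); auto. }
  assert (K : forall w1 w2 v1 v2, inN (x,y) (w1,w2) -> (w1,w2) <> (x,y) -> hw C (w1,w2) = 2 ->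
     inN (x,y) (v1,v2) -> (v1,v2) <> (w1,w2) -> C (v1,v2)).
  { intros w1 w2 v1 v2 N Hne H2 Nv Hvw.
    assert (Hw : ~ C (w1,w2)).
    { intros Hw. destruct (G w1 w2 N Hne Hw). lra. }
    exact (key C HS (x,y) (w1,w2) (v1,v2) Hc N Hw H2 Nv Hvw). }
  apply combi with (x1 := C (x-1, y)%Z) (x2 := C (x - -1, y)%Z) (x3 := C (x, y-1)%Z)
    (x4 := C (x, y - -1)%Z) (x5 := C (x-1, y - -1)%Z) (x6 := C (x - -1, y-1)%Z);
  try apply hw_12;
  try (apply G; [rewrite inN_Z; lia| intros E; injection E; lia]);
  intros E; repeat split; refine (K _ _ _ _ _ _ E _ _);
  first [rewrite inN_Z; lia | intros E'; injection E'; lia].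
Qed.

Lemma box_Dsum n (F : Z -> Z -> vtx -> R) :
  box n (fun p => Dsum (fun a b => F a b p)) = Dsum (fun a b => box n (F a b)).
Proof. unfold Dsum. rewrite !box_plus. reflexivity. Qed.

Lemma main_ineq C : solid_locating_dominating C -> forall n,
  2 * card_Vn n <= 8 * count_in_Vn C (S n).
Proof.
  intros HS n.
  set (G := fun u c : vtx => Defs.ind (C c) * hw C u).
  assert (HG : forall p q, 0 <= G p q).
  { intros p q. unfold G. destruct (ind_01 (C q)) as [E|E]; rewrite E;
    destruct (hw_12 C p) as [E'|E']; rewrite E'; lra. }
  transitivity (box n (fun _ => 2)).
  { right. rewrite box_const. unfold card_Vn. ring. }
  eapply Rle_trans.
  { apply box_le. intros p. apply (lower_pt C HS p). }
  change (box n (fun p => Dsum (fun a b => G p (fst p + a, snd p + b)%Z)) <= 8 * count_in_Vn C (S n)).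
  rewrite (box_Dsum n (fun a b p => G p (fst p + a, snd p + b)%Z)).
  eapply Rle_trans.
  { unfold Dsum.
    repeat apply Rplus_le_compat; apply shift_le; auto; lia. }
  change (Dsum (fun a b => box (S n) (fun c => G (fst c - a, snd c - b)%Z c)) <= 8 * count_in_Vn C (S n)).
  rewrite <- (box_Dsum (S n) (fun a b c => G (fst c - a, snd c - b)%Z c)).
  rewrite count_box, <- box_scal. apply box_le. intros c.
  apply (upper_pt C HS c).
Qed.

Lemma lim_gen (b : R) :
  is_lim_seq (fun n => (INR n + b)^2 / (2 * INR n + 1)^2) (1/4).
Proof.
  assert (H1 : is_lim_seq (fun n => 2 * INR n + 1) p_infty).
  { apply is_lim_seq_le_p_loc with (u := INR); [|apply is_lim_seq_INR].
    exists 0%nat. intros n _. pose proof (pos_INR n). lra. }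
  assert (H2 : is_lim_seq (fun n => / (2 * INR n + 1)) 0).
  { apply (is_lim_seq_inv _ p_infty) in H1; [exact H1|discriminate]. }
  assert (H3 : is_lim_seq (fun n => 1/2 + (b - 1/2) * / (2 * INR n + 1)) (1/2 + (b-1/2)*0)).
  { apply is_lim_seq_plus'; [apply is_lim_seq_const|].
    apply (is_lim_seq_scal_l _ (b-1/2) 0) in H2. exact H2. }
  pose proof (is_lim_seq_mult' _ _ _ _ H3 H3) as H4.
  replace ((1 / 2 + (b - 1 / 2) * 0) * (1 / 2 + (b - 1 / 2) * 0)) with (1/4) in H4 by field.
  revert H4. apply is_lim_seq_ext. intros n.
  pose proof (pos_INR n). field. lra.
Qed.

Lemma sumZ_1 lo f : sumZ lo 1 f = f lo.
Proof. simpl. rewrite Z.add_0_r. ring. Qed.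

Definition ev (i : Z) : R := Defs.ind (Z.even i = true).

Definition En (n : nat) : R := sumZ (- Z.of_nat n) (2*n+1) ev.

Lemma count_even n : count_in_Vn C_even n = En n ^ 2.
Proof.
  rewrite count_box. unfold box, En.
  transitivity (sumZ (- Z.of_nat n) (2 * n + 1) (fun i => ev i * sumZ (- Z.of_nat n) (2 * n + 1) ev)).
  - apply sumZ_ext. intros i. rewrite <- sumZ_scal. apply sumZ_ext. intros j.
    unfold C_even, ev. cbn [fst snd].
    destruct (classic (Z.even i = true)) as [Hi|Hi];
    destruct (classic (Z.even j = true)) as [Hj|Hj].
    + rewrite !ind_true; auto. lra.
    + rewrite (ind_false (Z.even j = true)), ind_false; [lra|tauto|tauto].
    + rewrite (ind_false (Z.even i = true)), ind_false; [lra|tauto|tauto].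
    + rewrite (ind_false (Z.even i = true)), ind_false; [lra|tauto|tauto].
  - rewrite (sumZ_ext _ _ _ (fun i => sumZ (- Z.of_nat n) (2 * n + 1) ev * ev i)).
    + rewrite sumZ_scal. ring.
    + intros; ring.
Qed.

Lemma ev_succ n : ev (Z.of_nat (S n)) + ev (Z.of_nat n) = 1.
Proof.
  unfold ev. rewrite Nat2Z.inj_succ, Z.even_succ, <- Z.negb_even.
  destruct (Z.even (Z.of_nat n)); cbn [negb].
  - rewrite (ind_false (false = true)), ind_true; [lra|auto|discriminate].
  - rewrite (ind_false (false = true)), ind_true; [lra|auto|discriminate].
Qed.

Lemma En_eq n : En n = INR n + ev (Z.of_nat n).
Proof.
  induction n.
  - unfold En. simpl. reflexivity.
  - unfold En in *.
    replace (2 * S n + 1)%nat with ((1 + (2*n+1)) + 1)%nat by lia.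
    rewrite sumZ_split, sumZ_split. rewrite S_INR.
    replace (- Z.of_nat (S n) + Z.of_nat 1)%Z with (- Z.of_nat n)%Z by lia.
    rewrite IHn, !sumZ_1.
    replace (- Z.of_nat (S n) + Z.of_nat (1 + (2 * n + 1)))%Z with (Z.of_nat (S n)) by lia.
    assert (ev (- Z.of_nat (S n))%Z = ev (Z.of_nat (S n))) as ->.
    { unfold ev. rewrite Z.even_opp. reflexivity. }
    pose proof (ev_succ n). lra.
Qed.

Lemma ev_01 i : 0 <= ev i <= 1.
Proof. unfold ev. destruct (ind_01 (Z.even i = true)) as [E|E]; rewrite E; lra. Qed.

Lemma density_even : density C_even = Finite (1/4).
Proof.
  unfold density. apply is_LimSup_seq_unique, is_lim_LimSup_seq.
  apply is_lim_seq_le_le with (u := fun n => (INR n + 0)^2 / (2 * INR n + 1)^2)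
    (w := fun n => (INR n + 1)^2 / (2 * INR n + 1)^2); [|apply lim_gen|apply lim_gen].
  intros n. rewrite count_even, En_eq. unfold card_Vn.
  pose proof (pos_INR n). pose proof (ev_01 (Z.of_nat n)).
  assert (0 < / (2 * INR n + 1)^2) by (apply Rinv_0_lt_compat; nra).
  unfold Rdiv. split; apply Rmult_le_compat_r; try lra; nra.
Qed.

Lemma lower_density C : solid_locating_dominating C -> Rbar_le (Finite (1/4)) (density C).
Proof.
  intros HS. unfold density.
  set (v := fun n => (INR n + - (1/2))^2 / (2 * INR n + 1)^2).
  assert (Lv : LimSup_seq v = Finite (1/4)).
  { apply is_LimSup_seq_unique, is_lim_LimSup_seq. apply lim_gen. }
  rewrite <- Lv. apply LimSup_le. exists 1%nat. intros n Hn.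
  destruct n as [|m]; [lia|].
  pose proof (main_ineq C HS m) as M. unfold v, card_Vn in *.
  rewrite S_INR. pose proof (pos_INR m).
  assert (0 < (2 * (INR m + 1) + 1)^2) by nra.
  replace ((INR m + 1 + - (1 / 2)) ^ 2 / (2 * (INR m + 1) + 1) ^ 2) with
     (((2 * INR m + 1) ^ 2 / 4) / (2 * (INR m + 1) + 1) ^ 2) by (field; lra).
  unfold Rdiv. apply Rmult_le_compat_r; [apply Rlt_le, Rinv_0_lt_compat; lra|]. lra.
Qed.

Theorem theorem7 :
  self_locating_dominating C_even /\
  solid_locating_dominating C_even /\
  density C_even = Finite (1 / 4) /\
  (forall C : code, (exists c, C c) -> self_locating_dominating C ->
     Rbar_le (Finite (1 / 4)) (density C)) /\
  (forall C : code, (exists c, C c) -> solid_locating_dominating C ->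
     Rbar_le (Finite (1 / 4)) (density C)).
Proof.
  split; [exact Ceven_self|].
  split; [exact (self_solid _ Ceven_self)|].
  split; [exact density_even|].
  split.
  - intros C _ HS. apply lower_density, self_solid, HS.
  - intros C _ HS. apply lower_density, HS.
Qed.
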